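(* Let $\mathfrak{L}$ be a class of groups closed under finite index subgroups, let $I:\mathfrak{L}\to\mathbb{R}$ be an invariant and let $G\in\mathfrak{L}$. If $I$ is submultiplicative with respect to finite index normal subgroups, set $\tilde{I}(K)=\inf_{L\leqslant_f K}\frac{I(L)}{|K:L|}$ for $K\in\mathfrak{L}$; then \[\tilde{I}(G)=\frac{\tilde{I}(H)}{|G:H|}\] for every finite index subgroup $H$ of $G$ (so $\tilde I$ is a generalised Euler characteristic). If instead $I$ is supermultiplicative with respect to finite index normal subgroups, set $\tilde{I}(K)=\sup_{L\leqslant_f K}\frac{I(L)}{|K:L|}$; then the same equality $\tilde{I}(G)=\tilde{I}(H)/|G:H|$ holds for every finite index subgroup $H$ of $G$.
   Context: $\mathfrak{L}$ closed under finite index subgroups means that if $G\in\mathfrak{L}$ and $H$ has finite index in $G$ then $H\in\mathfrak{L}$. $I$ is submultiplicative (resp. supermultiplicative) with respect to finite index normal subgroups if $\frac{I(H)}{|G:H|}\le I(G)$ (resp. $\ge I(G)$) for every $G\in\mathfrak{L}$ and every finite index normal subgroup $H$ of $G$. In $\tilde I$ the infimum/supremum ranges over all finite index subgroups $L$ of $K$. *)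

(* Defs.v *)
From HB Require Import structures.
From mathcomp Require Import all_boot all_order all_algebra.
From mathcomp Require Import monoid finmap.
From mathcomp Require Import all_classical all_reals ereal.

Set Implicit Arguments.
Unset Strict Implicit.
Unset Printing Implicit Defensive.

Import Order.TTheory GRing.Theory Num.Theory.
Local Open Scope classical_set_scope.
Local Open Scope ring_scope.

Section GroupDefs.
Variable gT : groupType.

Definition ab_subgroup (K : set gT) : Prop :=
  K 1%g /\ (forall x y, K x -> K y -> K (x * y)%g) /\ (forall x, K x -> K (x^-1)%g).

Definition ab_lcoset (x : gT) (L : set gT) : set gT := [set (x * y)%g | y in L].

Definition ab_lcosets (K L : set gT) : set (set gT) := [set ab_lcoset x L | x in K].

(* the ab_index |K : L| (meaningful when the coset space is finite) *)
Definition ab_index (K L : set gT) : nat := #|` fset_set (ab_lcosets K L)|.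

Definition ab_subgroup_of (L K : set gT) : Prop := ab_subgroup L /\ L `<=` K.

Definition ab_fi_subgroup (L K : set gT) : Prop :=
  ab_subgroup_of L K /\ finite_set (ab_lcosets K L).

Definition ab_normal (N K : set gT) : Prop :=
  ab_subgroup_of N K /\ (forall x y, K x -> N y -> N (x^-1 * y * x)%g).

Definition ab_isomorphic (K K' : set gT) : Prop :=
  exists f : gT -> gT,
    [/\ (forall x y, K x -> K y -> f (x * y)%g = (f x * f y)%g),
        (forall x y, K x -> K y -> f x = f y -> x = y) &
        f @` K = K'].

(* a class of groups (here: of subgroups of gT), closed under isomorphism *)
Definition ab_group_class (Lc : set (set gT)) : Prop :=
  (forall K, Lc K -> ab_subgroup K) /\
  (forall K K', Lc K -> ab_subgroup K' -> ab_isomorphic K K' -> Lc K').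

Definition ab_closed_fi (Lc : set (set gT)) : Prop :=
  forall K L, Lc K -> ab_fi_subgroup L K -> Lc L.

Definition ab_invariant {R : realType} (Lc : set (set gT)) (I : set gT -> R) : Prop :=
  forall K K', Lc K -> Lc K' -> ab_isomorphic K K' -> I K = I K'.

Definition ab_submult {R : realType} (Lc : set (set gT)) (I : set gT -> R) : Prop :=
  forall K N, Lc K -> ab_fi_subgroup N K -> ab_normal N K ->
    I N / (ab_index K N)%:R <= I K.

Definition ab_supermult {R : realType} (Lc : set (set gT)) (I : set gT -> R) : Prop :=
  forall K N, Lc K -> ab_fi_subgroup N K -> ab_normal N K ->
    I N / (ab_index K N)%:R >= I K.

Definition Itilde_inf {R : realType} (I : set gT -> R) (K : set gT) : \bar R :=
  ereal_inf [set ((I L / (ab_index K L)%:R)%:E) | L in [set L | ab_fi_subgroup L K]].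

Definition Itilde_sup {R : realType} (I : set gT -> R) (K : set gT) : \bar R :=
  ereal_sup [set ((I L / (ab_index K L)%:R)%:E) | L in [set L | ab_fi_subgroup L K]].

End GroupDefs.

(* Main.v *)
Require Import Defs.
From HB Require Import structures.
From mathcomp Require Import all_boot all_order all_algebra.
From mathcomp Require Import monoid finmap.
From mathcomp Require Import all_classical all_reals ereal.
Import Order.TTheory GRing.Theory Num.Theory.
Local Open Scope classical_set_scope.
Local Open Scope ring_scope.


Lemma card_fsetM (T1 T2 : choiceType) (A : {fset T1}) (B : {fset T2}) :
  #|` (A `*` B)%fset| = (#|` A| * #|` B|)%N.
Proof.
have -> : (#|` A| * #|` B| = \sum_(i <- A) \sum_(j <- B) 1)%N.
  rewrite (eq_bigr (fun=> #|` B|)); last by move=> i _; rewrite card_fset_sum1.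
  by rewrite big_const_seq iter_addn_0 count_predT mulnC.
rewrite card_fset_sum1.
have := @pair_big_dep_cond _ _ addn T1 T2 A (fun=> B) predT (fun _ => predT) (fun _ _ => 1%N).
move=> ->; apply: perm_big; apply: uniq_perm => //= [[x y]].
by rewrite in_fsetM !inE /= andbT andbT.
Qed.

Section Grp.
Variable gT : groupType.
Implicit Types (A B C D K L M N H G : set gT) (x y z a b : gT).

Lemma lcosetM a b A : ab_lcoset a (ab_lcoset b A) = ab_lcoset (a * b)%g A.
Proof.
apply/seteqP; split => z /=.
  by move=> [_ [y Ay <-] <-]; exists y => //; rewrite mulgA.
by move=> [y Ay <-]; exists (b * y)%g; [exists y|rewrite mulgA].
Qed.

Lemma lcoset1 A : ab_lcoset 1%g A = A.
Proof.
apply/seteqP; split => z /=; first by move=> [y Ay <-]; rewrite mul1g.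
by move=> Az; exists z => //; rewrite mul1g.
Qed.

Lemma lcosetK a D : ab_lcoset (a^-1)%g (ab_lcoset a D) = D.
Proof. by rewrite lcosetM mulVg lcoset1. Qed.

Lemma mem_lcoset x A z : ab_lcoset x A z <-> A (x^-1 * z)%g.
Proof.
split; first by move=> [y Ay <-]; rewrite mulKg.
by move=> Ay; exists (x^-1 * z)%g => //; rewrite mulVKg.
Qed.

Lemma sgM A a b : ab_subgroup A -> A a -> A b -> A (a * b)%g.
Proof. by move=> [_ [h _]]; apply: h. Qed.
Lemma sgV A a : ab_subgroup A -> A a -> A (a^-1)%g.
Proof. by move=> [_ [_ h]]; apply: h. Qed.
Lemma sg1 A : ab_subgroup A -> A 1%g.
Proof. by case. Qed.

Lemma lcoset_eq A x y : ab_subgroup A ->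
  (ab_lcoset x A = ab_lcoset y A <-> A (x^-1 * y)%g).
Proof.
move=> sA; split.
  move=> E; have : ab_lcoset y A y by apply/mem_lcoset; rewrite mulVg; exact: sg1.
  by rewrite -E => /mem_lcoset.
move=> Axy; apply/seteqP; split => z /mem_lcoset Hz; apply/mem_lcoset.
  have -> : (y^-1 * z = (x^-1 * y)^-1 * (x^-1 * z))%g.
    by rewrite invgM invgK -mulgA mulVKg.
  by apply: sgM => //; exact: sgV.
have -> : (x^-1 * z = (x^-1 * y) * (y^-1 * z))%g by rewrite -mulgA mulVKg.
exact: sgM.
Qed.

Lemma fin_key (U : Type) L N (key : gT -> U) :
  ab_subgroup L -> ab_subgroup N -> N `<=` L ->
  (forall y z, L y -> L z -> (key y = key z <-> N (y^-1 * z)%g)) ->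
  finite_set (key @` L) -> finite_set (ab_lcosets L N).
Proof.
move=> sL sN NL hk fk.
apply: (sub_finite_set _ (finite_image (fun u => [set z | L z /\ key z = u]) fk)).
move=> _ [y Ly <-]; exists (key y); first by exists y.
apply/seteqP; split => z /=.
  by move=> [Lz kz]; apply/mem_lcoset; apply/(hk y z Ly Lz).
move=> /mem_lcoset Nz; have Lz : L z.
  by rewrite -(mulVKg y z); apply: sgM => //; exact: NL.
by split => //; symmetry; apply/(hk y z Ly Lz).
Qed.


Lemma index_mul G H L : ab_subgroup G -> ab_subgroup H -> ab_subgroup L ->
  H `<=` G -> L `<=` H -> finite_set (ab_lcosets G H) ->
  finite_set (ab_lcosets H L) ->
  finite_set (ab_lcosets G L) /\ ab_index G L = (ab_index G H * ab_index H L)%N.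
Proof.
move=> sG sH sL HG LH fGH fHL.
pose t (C : set gT) := xget 1%g C.
pose phi (p : set gT * set gT) := ab_lcoset (t p.1) p.2.
have tC x : H (x^-1 * t (ab_lcoset x H))%g.
  apply/mem_lcoset; apply: (xgetI 1%g (x := x)); apply/mem_lcoset.
  by rewrite mulVg; exact: sg1.
have E : ab_lcosets G L = phi @` (ab_lcosets G H `*` ab_lcosets H L).
  apply/seteqP; split.
    move=> _ [x Gx <-]; have Hc := tC x.
    exists (ab_lcoset x H, ab_lcoset ((t (ab_lcoset x H))^-1 * x)%g L).
      split; first by exists x.
      exists ((t (ab_lcoset x H))^-1 * x)%g => //.
      by rewrite -[X in H X]invgK invgM invgK; exact: sgV.
    by rewrite /phi /= lcosetM mulVKg.
  move=> _ [[C D] /= [[x Gx <-] [y Hy <-]] <-].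
  exists (t (ab_lcoset x H) * y)%g; last by rewrite /phi /= lcosetM.
  apply: sgM => //; last exact: HG.
  rewrite -(mulVKg x (t (ab_lcoset x H))); apply: sgM => //; exact/HG/tC.
have inj : forall p q, (ab_lcosets G H `*` ab_lcosets H L) p ->
    (ab_lcosets G H `*` ab_lcosets H L) q -> phi p = phi q -> p = q.
  move=> [C D] [C' D'] /= [[x Gx <-] [y Hy <-]] /= [[x' Gx' <-] [y' Hy' <-]] /=.
  rewrite /phi /= !lcosetM => /(lcoset_eq _ _ _ sL) Lr.
  have HC : ab_lcoset x H = ab_lcoset x' H.
    rewrite (proj2 (lcoset_eq _ x _ sH) (tC x)).
    rewrite (proj2 (lcoset_eq _ x' _ sH) (tC x')).
    have e1 : ab_lcoset (t (ab_lcoset x H)) H =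
              ab_lcoset (t (ab_lcoset x H) * y)%g H.
      by apply/lcoset_eq => //; rewrite mulKg.
    have e2 : ab_lcoset (t (ab_lcoset x' H)) H =
              ab_lcoset (t (ab_lcoset x' H) * y')%g H.
      by apply/lcoset_eq => //; rewrite mulKg.
    by rewrite e1 e2; apply/lcoset_eq => //; exact: LH.
  rewrite -HC in Lr *; congr pair; apply/lcoset_eq => //.
  by move: Lr; rewrite invgM -mulgA mulKg.
have fX : finite_set (ab_lcosets G H `*` ab_lcosets H L) by exact: finite_setX.
split; first by rewrite E; exact: finite_image.
rewrite /ab_index E fset_set_image // card_in_imfset /=; last first.
  by move=> p q; rewrite !in_fset_set // !inE; apply: inj.
by rewrite fset_setX // card_fsetM.
Qed.


Lemma core_exists G H L : ab_subgroup G -> ab_subgroup H -> ab_subgroup L ->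
  H `<=` G -> L `<=` G -> finite_set (ab_lcosets G H) ->
  exists N, [/\ ab_fi_subgroup N L, ab_normal N L & N `<=` H].
Proof.
move=> sG sH sL HG LG fGH.
pose M := L `&` H.
have sM : ab_subgroup M.
  split; first by split; exact: sg1.
  split; first by move=> a b [La Ha] [Lb Hb]; split; exact: sgM.
  by move=> a [La Ha]; split; exact: sgV.
have fLM : finite_set (ab_lcosets L M).
  apply: (@fin_key _ L M (fun z => ab_lcoset z H)) => //.
  - by move=> a [].
  - move=> y z Ly Lz; rewrite lcoset_eq //; split; last by case.
    by move=> Hyz; split => //; apply: sgM => //; exact: sgV.
  - apply: (sub_finite_set _ fGH) => _ [y Ly <-]; exists y => //; exact: LG.
pose N := [set n | L n /\ forall x, L x ->
  ab_lcoset n (ab_lcoset x M) = ab_lcoset x M].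
have sN : ab_subgroup N.
  split; first by split; [exact: sg1| move=> x _; rewrite lcoset1].
  split.
    move=> a b [La ha] [Lb hb]; split; first exact: sgM.
    by move=> x Lx; rewrite -lcosetM hb // ha.
  move=> a [La ha]; split; first exact: sgV.
  by move=> x Lx; rewrite -{1}(ha x Lx) lcosetK.
have NL : N `<=` L by move=> n [].
have NH : N `<=` H.
  move=> n [Ln hn]; have := hn 1%g (sg1 _ sL); rewrite !lcoset1 => e.
  have : ab_lcoset n M n by apply/mem_lcoset; rewrite mulVg; exact: sg1.
  by rewrite e => -[].
pose key z := [set (C, ab_lcoset z C) | C in ab_lcosets L M].
have fLN : finite_set (ab_lcosets L N).
  apply: (@fin_key _ L N key) => //.
  - move=> y z Ly Lz; split.
      move=> e; split; first by apply: sgM => //; exact: sgV.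
      move=> x Lx.
      have : key z (ab_lcoset x M, ab_lcoset z (ab_lcoset x M)).
        by exists (ab_lcoset x M) => //; exists x.
      rewrite -e => -[C' _ [e1 e2]]; rewrite e1 in e2.
      by rewrite -lcosetM -e2 lcosetK.
    move=> [_ hn].
    have ez : forall C, ab_lcosets L M C -> ab_lcoset z C = ab_lcoset y C.
      by move=> _ [x Lx <-]; rewrite -(mulVKg y z) -lcosetM hn.
    apply/seteqP; split => _ [C LC <-]; exists C => //; by rewrite ez.
  - pose X := ab_lcosets L M `*` ab_lcosets L M.
    have fX : finite_set X by exact: finite_setX.
    apply: (sub_finite_set _ (finite_image (fun F : {fset _} => [set` F])
      (finite_fset (fpowerset (fset_set X))))).
    move=> _ [y Ly <-].
    have fk : finite_set (key y) by exact: finite_image.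
    exists (fset_set (key y)); last by rewrite fset_setK.
    rewrite /= fpowersetE -fset_set_sub //.
    move=> _ [C [x Lx <-] <-]; split; first by exists x.
    by exists (y * x)%g; [exact: sgM | rewrite lcosetM].
exists N; split => //.
split; first by split.
move=> x n Lx [Ln hn]; split.
  by apply: sgM => //; apply: sgM => //; exact: sgV.
move=> y Ly; rewrite -!lcosetM (lcosetM x y) hn; last exact: sgM.
by rewrite -lcosetM lcosetK.
Qed.


Lemma index_gt0 K L : ab_subgroup K -> finite_set (ab_lcosets K L) ->
  (0 < ab_index K L)%N.
Proof.
move=> sK fKL; rewrite /ab_index cardfs_gt0; apply/fset0Pn.
by exists (ab_lcoset 1%g L); rewrite in_fset_set // inE; exists 1%g => //; exact: sg1.
Qed.

Lemma fi_sub G H N : ab_subgroup G -> ab_subgroup H -> ab_subgroup N ->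
  H `<=` G -> N `<=` H -> finite_set (ab_lcosets G N) ->
  finite_set (ab_lcosets H N).
Proof.
move=> sG sH sN HG NH fGN.
apply: (@fin_key _ H N (fun z => ab_lcoset z N)) => //.
  by move=> y z _ _; rewrite lcoset_eq.
apply: (sub_finite_set _ fGN) => _ [y Hy <-]; exists y => //; exact: HG.
Qed.

End Grp.
Arguments index_mul {gT G H L}.
Arguments core_exists {gT G H L}.
Arguments fi_sub {gT G H N}.

Section Main.
Variables (R : realType) (gT : groupType).
Implicit Types (K L N H G : set gT).

Lemma inf_main (Lc : set (set gT)) (I : set gT -> R) G H :
  ab_closed_fi Lc -> ab_subgroup G -> Lc G -> ab_submult Lc I ->
  ab_fi_subgroup H G ->
  Itilde_inf I G = (Itilde_inf I H * ((ab_index G H)%:R^-1)%:E)%E.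
Proof.
move=> clo sG LcG sub [[sH HG] fGH].
have c0 : 0 < (ab_index G H)%:R :> R by rewrite ltr0n index_gt0.
apply/le_anti/andP; split.
  rewrite lee_pdivlMr //; apply: le_ereal_inf_tmp => _ [L [[sL LH] fHL] <-].
  have [fGL eGL] := index_mul sG sH sL HG LH fGH fHL.
  rewrite -lee_pdivlMr // -EFinM; apply: ereal_inf_lbound.
  exists L; first by split => //; split => // x /LH /HG.
  congr (_%:E); rewrite eGL natrM invfM mulrA; exact: mulrAC.
apply: le_ereal_inf_tmp => _ [L [[sL LG] fGL] <-].
have [N [[[sN NL] fLN] nNL NH]] := core_exists sG sH sL HG LG fGH.
have [fGN eGN] := index_mul sG sL sN LG NL fGL fLN.
have fHN := fi_sub sG sH sN HG NH fGN.
have [_ eGN'] := index_mul sG sH sN HG NH fGH fHN.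
have LcL : Lc L by apply: (clo G L LcG); split => //; split.
have hs := sub L N LcL (conj (conj sN NL) fLN) nNL.
apply: (@le_trans _ _ ((I N / (ab_index H N)%:R)%:E * ((ab_index G H)%:R^-1)%:E)%E).
  apply: lee_wpmul2r; first by rewrite lee_fin invr_ge0 ltW.
  by apply: ereal_inf_lbound; exists N => //; split => //; split.
rewrite -EFinM lee_fin -mulrA -invfM -natrM mulnC -eGN' eGN natrM invfM mulrA.
rewrite mulrAC; apply: ler_wpM2r => //; by rewrite invr_ge0 ler0n.
Qed.

Lemma sup_inf (I : set gT -> R) K :
  Itilde_sup I K = (- Itilde_inf (fun K => (- I K)%R) K)%E.
Proof.
rewrite /Itilde_sup /Itilde_inf ereal_supEN; congr (- ereal_inf _)%E.
by rewrite image_comp; apply: eq_imagel => L _ /=; rewrite mulNr EFinN.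
Qed.

Lemma sup_main (Lc : set (set gT)) (I : set gT -> R) G H :
  ab_closed_fi Lc -> ab_subgroup G -> Lc G -> ab_supermult Lc I ->
  ab_fi_subgroup H G ->
  Itilde_sup I G = (Itilde_sup I H * ((ab_index G H)%:R^-1)%:E)%E.
Proof.
move=> clo sG LcG sup fH.
rewrite !sup_inf (@inf_main _ (fun K => (- I K)%R) _ _ clo sG LcG _ fH) ?mulNe //.
by move=> K N LcK fN nN; rewrite mulNr lerN2; exact: sup.
Qed.

End Main.
Arguments inf_main {R gT Lc I G H}.
Arguments sup_main {R gT Lc I G H}.

Theorem mainTheorem2 (R : realType) (gT : groupType)
    (Lc : set (set gT)) (I : set gT -> R) (G : set gT) :
  ab_group_class Lc -> ab_closed_fi Lc -> ab_invariant Lc I -> Lc G ->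
  (ab_submult Lc I ->
     forall H, ab_fi_subgroup H G ->
       Itilde_inf I G = (Itilde_inf I H * ((ab_index G H)%:R^-1)%:E)%E) /\
  (ab_supermult Lc I ->
     forall H, ab_fi_subgroup H G ->
       Itilde_sup I G = (Itilde_sup I H * ((ab_index G H)%:R^-1)%:E)%E).
Proof.
move=> [cls _] clo _ LcG; have sG := cls G LcG; split.
  by move=> sub H fH; exact: (inf_main clo sG LcG sub fH).
by move=> sup H fH; exact: (sup_main clo sG LcG sup fH).
Qed.
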